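(* For every finite simple digraph $G$, ${\sf dgw}(G) \leq {\sf circ}(G) + 1$, where ${\sf dgw}(G)$ is the DAG-width of $G$ and ${\sf circ}(G)$ is its circumference.
   Context: All digraphs are finite and simple (no loops, no multiple arcs). The circumference ${\sf circ}(G)$ of a digraph $G$ is the length (number of arcs) of a longest simple directed cycle in $G$; if $G$ is acyclic (a DAG), ${\sf circ}(G)$ is defined to be $1$. For a DAG $T$ and distinct nodes $i,j$, write $i\prec j$ if there is a directed walk in $T$ from $i$ to $j$, and $i\preceq j$ if $i=j$ or $i\prec j$; a root is a node with no incoming arcs. Given sets $X_i$ for nodes $i$, let $X_{\succeq j}=\bigcup_{k\succeq j}X_k$. For $W,X\subseteq V(G)$, $X$ guards $W$ if $W\cap X=\emptyset$ and for every arc $(u,v)$ of $G$ with $u\in W$ we have $v\in W\cup X$. A DAG-decomposition of $G$ is a pair $(T,(X_i)_{i\in V(T)})$ where $T$ is a DAG and each $X_i\subseteq V(G)$, such that: (1) $\bigcup_{i}X_i=V(G)$; (2) for all nodes $i,j,k$ of $T$ with $i\preceq j\preceq k$, $X_i\cap X_k\subseteq X_j$; (3) for every arc $(i,j)$ of $T$, $X_i\cap X_j$ guards $X_{\succeq j}\setminus X_i$, and for every root $r$ of $T$, $X_{\succeq r}$ is guarded by $\emptyset$. Its width is $\max_i |X_i|$, and the DAG-width ${\sf dgw}(G)$ is the minimum width of a DAG-decomposition of $G$. *)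

(* Defs.v *)
From mathcomp Require Import all_boot.
Set Implicit Arguments. Unset Strict Implicit. Unset Printing Implicit Defensive.

(* A finite simple digraph: vertex type V : finType, arc relation e : rel V
   (at most one arc per ordered pair), with no loops. *)
Definition simple_digraph (V : finType) (e : rel V) : Prop := irreflexive e.

(* There is a simple directed cycle with exactly n arcs (n >= 1):
   n pairwise distinct vertices c_0,...,c_{n-1} with arcs c_i -> c_{i+1 mod n}. *)
Definition has_cycle_of_length (V : finType) (e : rel V) (n : nat) : bool :=
  (0 < n) && [exists c : n.-tuple V, uniq c && cycle e c].

(* circumference: length of a longest simple directed cycle, 1 if acyclic
   (simple cycles have at most #|V| arcs, and at least 2 in a loopless digraph) *)
Definition circ (V : finType) (e : rel V) : nat :=
  maxn 1 (\max_(n < #|V|.+1 | has_cycle_of_length e n) n).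

Definition is_dag (I : finType) (t : rel I) : Prop :=
  forall i j, t i j -> ~~ connect t j i.

Definition preceq (I : finType) (t : rel I) (i j : I) : bool := connect t i j.

Definition Xsucc (I V : finType) (t : rel I) (X : I -> {set V}) (j : I) : {set V} :=
  \bigcup_(k | preceq t j k) X k.

Definition guards (V : finType) (e : rel V) (W X : {set V}) : Prop :=
  [disjoint W & X] /\ (forall u v, u \in W -> e u v -> v \in W :|: X).

Definition is_root (I : finType) (t : rel I) (r : I) : Prop := forall i, ~~ t i r.

Definition is_dag_decomposition (V : finType) (e : rel V)
    (I : finType) (t : rel I) (X : I -> {set V}) : Prop :=
  [/\ is_dag t,
      \bigcup_(i : I) X i = [set: V],
      (forall i j k, preceq t i j -> preceq t j k -> X i :&: X k \subset X j),
      (forall i j, t i j -> guards e (Xsucc t X j :\: X i) (X i :&: X j)) &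
      (forall r, is_root t r -> guards e (Xsucc t X r) set0)].

Definition dec_width (I V : finType) (X : I -> {set V}) : nat := \max_(i : I) #|X i|.

(* dgw(G) <= k  iff  G has a DAG-decomposition of width at most k
   (dgw is the minimum width over all DAG-decompositions). *)
Definition dgw_le (V : finType) (e : rel V) (k : nat) : Prop :=
  exists (I : finType) (t : rel I) (X : I -> {set V}),
    is_dag_decomposition e t X /\ dec_width X <= k.

(* Main.v *)
Require Import Defs.
From mathcomp Require Import all_boot zify.
Set Implicit Arguments. Unset Strict Implicit. Unset Printing Implicit Defensive.

Lemma connect_closed (T : finType) (r : rel T) (P : pred T) x y :
  P x -> (forall a b, P a -> r a b -> P b) -> connect r x y -> P y.
Proof.
move=> Px cl /connectP [p pth ->]; elim: p x Px pth => //= b p IH x Px /andP [rxb pth].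
exact: IH (cl _ _ Px rxb) pth.
Qed.

Section DFS.
Variables (V : finType) (e : rel V).

Definition cpath (s : seq V) := if s is h :: t then path e h t else true.

Definition relU (U : {set V}) := [rel a b | (b \in U) && e a b].

Definition startok (pi : seq V) (p : V) := (pi == [::]) || e (last p pi) p.

Lemma cpath_rcons pi u : cpath pi -> startok pi u -> cpath (rcons pi u).
Proof.
case: pi => //= h t cp /orP [//|eu]; by rewrite rcons_path cp.
Qed.

Definition DFSinv (U : {set V}) (pi : seq V) (o : nat) (ap : V -> seq V) (pre sz : V -> nat) :=
  (forall y, y \in U -> exists2 s, ap y = pi ++ s & {subset s <= U}) /\
     (forall y, y \in U -> uniq (rcons (ap y) y) /\ cpath (rcons (ap y) y)) /\
     (forall y a, y \in U -> a \in U -> a \in ap y -> ap a = take (index a (ap y)) (ap y)) /\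
     (forall x y, x \in U -> y \in U -> ((y == x) || (x \in ap y)) = (pre x <= pre y < pre x + sz x)) /\
     (forall x, x \in U -> o <= pre x /\ pre x + sz x <= o + #|U|) /\
     (forall x y, x \in U -> y \in U -> e x y -> pre x < pre y -> x \in ap y).

Lemma dfs_ex n : forall (U : {set V}) (pi : seq V) (o : nat), #|U| <= n ->
  (forall x, x \in U -> x \notin pi) -> uniq pi -> cpath pi ->
  (forall x, x \in U -> exists2 p, (p \in U) && startok pi p & connect (relU U) p x) ->
  exists ap, exists pre, exists sz, DFSinv U pi o ap pre sz.
Proof.
elim: n => [|n IH] U pi o cU dU upi cpi reach.
  exists (fun _ => pi), (fun _ => 0), (fun _ => 0).
  move: cU; rewrite leqn0 => /eqP/cards0_eq ->.
  by do !split; intros; exfalso; move: H; rewrite inE.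
have [U0|[x0 x0U]] := set_0Vmem U.
  rewrite U0; exists (fun _ => pi), (fun _ => 0), (fun _ => 0).
  by do !split; intros; exfalso; move: H; rewrite inE.
have [u /andP [uU su] _] := reach x0 x0U.
pose S := [set x in U | connect (relU U) u x].
pose S' := S :\ u.
pose R := U :\: S.
have uS : u \in S by rewrite inE uU connect0.
have SU : {subset S <= U} by move=> x; rewrite inE => /andP[].
have Scl : forall a b, a \in S -> relU U a b -> b \in S.
  move=> a b; rewrite !inE => /andP [aU ua] rab.
  move: (rab) => /andP [bU _]; rewrite bU andTb.
  by apply: connect_trans ua _; apply: connect1.
have inS' : forall x, (x \in S') = (x != u) && (x \in S) by move=> x; rewrite in_setD1.
have inR : forall x, (x \in R) = (x \notin S) && (x \in U) by move=> x; rewrite in_setD.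
have uS' : u \notin S' by rewrite inS' eqxx.
have uR : u \notin R by rewrite inR uS.
have cardS : #|S| = #|S'|.+1 by rewrite (cardsD1 u S) uS.
have cardU : #|U| = #|S| + #|R|.
  have sSU : S \subset U by apply/subsetP.
  by rewrite -(cardsID S U) (setIidPr sSU).
have caseU : forall y, y \in U -> [\/ y = u, y \in S' | y \in R].
  move=> y yU; case: (eqVneq y u) => [->|yu]; first by constructor 1.
  case yS: (y \in S); first by constructor 2; rewrite inS' yu yS.
  by constructor 3; rewrite inR yS yU.
have S'U : {subset S' <= U} by move=> x; rewrite inS' => /andP [_ /SU].
have RU : {subset R <= U} by move=> x; rewrite inR => /andP [].
have S'R : forall x, x \in S' -> x \in R -> False.
  by move=> x; rewrite inS' inR => /andP [_ ->].
have [apA [preA [szA [A1 [A2 [A3 [A4 [A5 A6]]]]]]]] :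
    exists ap, exists pre, exists sz, DFSinv S' (rcons pi u) o.+1 ap pre sz.
  apply: IH.
  - have : #|S'| < #|U| by rewrite cardU cardS; clear; lia.
    clear -cU; lia.
  - move=> x xS'; rewrite mem_rcons in_cons negb_or dU ?S'U // andbT.
    by move: xS'; rewrite inS' => /andP [].
  - by rewrite rcons_uniq upi dU.
  - exact: cpath_rcons.
  move=> x; rewrite inS' => /andP [xu xS].
  move: (xS); rewrite inE => /andP [_ /connectP [p0 pth0 xl0]].
  move: xl0; case: (shortenP pth0) => p pth up _ xl0 {pth0}.
  case: p pth up xl0 => [|q r] /=; first by move=> _ _ xe; rewrite xe eqxx in xu.
  case/andP => /andP [qU euq] pth /andP [uqr uqr2] xl.
  have qS : q \in S by apply: (Scl u); rewrite //= qU.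
  exists q.
    rewrite inS' qS andbT /startok last_rcons euq orbT.
    by rewrite andbT; move: uqr; rewrite in_cons negb_or eq_sym => /andP [].
  apply/connectP; exists r => //.
  have : u \notin r by move: uqr; rewrite in_cons negb_or => /andP [].
  elim: r q qS {uqr uqr2 xl euq qU} pth => //= b r IHr a aS /andP [rab pth].
  rewrite in_cons negb_or => /andP [ub ur].
  have bS := Scl _ _ aS rab.
  rewrite /= inS' eq_sym ub bS /=; move: rab => /andP [_ ->] /=.
  exact: IHr.
have [apB [preB [szB [B1 [B2 [B3 [B4 [B5 B6]]]]]]]] :
    exists ap, exists pre, exists sz, DFSinv R pi (o + #|S|) ap pre sz.
  apply: IH => //.
  - have : #|R| < #|U| by rewrite cardU cardS; clear; lia.
    clear -cU; lia.
  - by move=> x /RU /dU.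
  move=> x xR; have [p /andP [pU sp] /connectP [q pth xl]] := reach x (RU _ xR).
  suff : path (relU R) p q /\ p \in R.
    by case=> pth' pR; exists p; rewrite ?pR ?sp //; apply/connectP; exists q.
  have : last p q \notin S by rewrite -xl; move: xR; rewrite inR => /andP [].
  elim: q p pU pth {xl sp} => [|b q IHq] a aU /=.
    by move=> _ aS; rewrite inR aS aU.
  case/andP => rab pth lS.
  have bU : b \in U by case/andP: rab.
  have [pth' bR] := IHq b bU pth lS.
  split; first by rewrite /= pth' andbT bR /=; case/andP: rab.
  rewrite inR aU andbT; apply/negP => aS.
  by move: bR; rewrite inR (Scl _ _ aS rab).
pose sel (T : Type) (f g h : V -> T) x := if x == u then f x else if x \in S then g x else h x.
have selu : forall T (f g h : V -> T), sel T f g h u = f u by move=> *; rewrite /sel eqxx.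
have selS : forall T (f g h : V -> T) x, x \in S' -> sel T f g h x = g x.
  by move=> T f g h x; rewrite inS' /sel => /andP [/negbTE -> ->].
have selR : forall T (f g h : V -> T) x, x \in R -> sel T f g h x = h x.
  move=> T f g h x; rewrite inR /sel => /andP [/negbTE xS _]; rewrite xS.
  by case: eqP => // xu; rewrite xu uS in xS.
have apu : forall y, y \in S' -> exists2 s, apA y = pi ++ u :: s & {subset s <= S'}.
  by move=> y yS; have [s -> ss] := A1 y yS; exists s => //; rewrite -cats1 -catA.
pose ap := sel _ (fun _ => pi) apA apB.
pose pre := sel _ (fun _ => o) preA preB.
pose sz := sel _ (fun _ => #|S|) szA szB.
have memap : forall y z, y \in U -> z \in U -> z \in ap y ->
    (y \in S') && ((z == u) || (z \in S')) || (y \in R) && (z \in R).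
  move=> y z yU zU; case: (caseU y yU) => [->|yS|yR].
  - by rewrite /ap selu => zpi; move: (dU z zU); rewrite zpi.
  - rewrite /ap selS //; have [s -> ss] := apu y yS.
    rewrite mem_cat in_cons yS /= => /or3P [zpi|->//|/ss ->]; last by rewrite orbT.
    by move: (dU z zU); rewrite zpi.
  - rewrite /ap selR //; have [s -> ss] := B1 y yR.
    rewrite mem_cat yR orbC /= => /orP [/ss ->|zpi]; first by rewrite ?andbT ?orbT.
    by move: (dU z zU); rewrite zpi.
have A5' := fun x xS => A5 x xS.
have nS'R : forall x, x \in S' -> x \in R = false.
  by move=> x xS; apply/negP => /(S'R x xS).
have nRS' : forall x, x \in R -> x \in S' = false.
  by move=> x xR; apply/negP => /S'R; move/(_ xR).
have szA0 : forall y, y \in S' -> 0 < szA y.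
  by move=> y yS; move: (A4 y y yS yS); rewrite eqxx leqnn /= => /esym; rewrite -{1}[preA y]addn0 ltn_add2l.
have szB0 : forall y, y \in R -> 0 < szB y.
  by move=> y yR; move: (B4 y y yR yR); rewrite eqxx leqnn /= => /esym; rewrite -{1}[preB y]addn0 ltn_add2l.
exists ap, pre, sz; split; [|split; [|split; [|split; [|split]]]].
- move=> y yU; case: (caseU y yU) => [->|yS|yR].
  + by exists [::]; rewrite /ap ?selu ?cats0.
  + have [s es ss] := apu y yS; exists (u :: s); first by rewrite /ap selS.
    by move=> z; rewrite in_cons => /orP [/eqP ->//|/ss /S'U].
  + have [s es ss] := B1 y yR; exists s; first by rewrite /ap selR.
    by move=> z /ss /RU.
- move=> y yU; case: (caseU y yU) => [->|yS|yR].
  + rewrite /ap selu rcons_uniq upi dU //; split => //; exact: cpath_rcons.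
  + by rewrite /ap selS //; apply: A2.
  + by rewrite /ap selR //; apply: B2.
- move=> y a yU aU aay; case/orP: (memap y a yU aU aay) => /andP [yS].
  + case/orP => [/eqP ->|aS].
      rewrite /ap selu selS //; have [s -> _] := apu y yS.
      by rewrite index_cat (negbTE (dU u uU)) /= eqxx addn0 take_size_cat.
    by move: aay; rewrite /ap !selS //; apply: A3.
  + by move=> aR; move: aay; rewrite /ap !selR //; apply: B3.
- move=> x y xU yU.
  have cS := cardS; have cU' := cardU.
  case: (caseU x xU) => [->|xS|xR]; case: (caseU y yU) => [->|yS|yR];
    rewrite /ap /pre /sz ?selu;
    rewrite ?(selS _ _ _ _ _ xS) ?(selS _ _ _ _ _ yS) ?(selR _ _ _ _ _ xR) ?(selR _ _ _ _ _ yR).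
  + by rewrite eqxx; clear -cS cU'; lia.
  + have [s -> _] := apu y yS.
    rewrite mem_cat in_cons eqxx !orbT.
    by have := A5 y yS; have := szA0 y yS; clear -cS cU'; lia.
  + have [s -> ss] := B1 y yR.
    rewrite mem_cat (negbTE (dU u uU)) /=.
    have -> : (y == u) = false by apply/negP => /eqP yu; move: uR; rewrite -yu yR.
    have -> : (u \in s) = false by apply/negP => /ss; rewrite (negbTE uR).
    by have := B5 y yR; clear -cS cU'; lia.
  + rewrite (negbTE (dU x xU)).
    have -> : (u == x) = false by apply/negP => /eqP ux; move: uS'; rewrite ux xS.
    by have := A5 x xS; clear -cS cU'; lia.
  + by apply: A4.
  + have [s -> ss] := B1 y yR.
    rewrite mem_cat (negbTE (dU x xU)) /=.
    have -> : (y == x) = false by apply/negP => /eqP yx; move: xS; rewrite -yx nRS'.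
    have -> : (x \in s) = false by apply/negP => /ss; rewrite nS'R.
    by have := A5 x xS; have := B5 y yR; clear -cS cU'; lia.
  + rewrite (negbTE (dU x xU)).
    have -> : (u == x) = false by apply/negP => /eqP ux; move: uR; rewrite ux xR.
    by have := B5 x xR; clear -cS cU'; lia.
  + have [s -> ss] := apu y yS.
    rewrite mem_cat in_cons (negbTE (dU x xU)) /=.
    have -> : (y == x) = false by apply/negP => /eqP yx; move: xR; rewrite -yx nS'R.
    have -> : (x == u) = false by apply/negP => /eqP xu; move: uR; rewrite -xu xR.
    have -> : (x \in s) = false by apply/negP => /ss; rewrite nRS'.
    by have := A5 y yS; have := szA0 y yS; have := B5 x xR; clear -cS cU'; lia.
  + by apply: B4.
- move=> x xU; have cS := cardS; have cU' := cardU.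
  case: (caseU x xU) => [->|xS|xR].
  + by rewrite /pre /sz !selu; clear -cS cU'; lia.
  + by rewrite /pre /sz !(selS _ _ _ _ _ xS); have := A5 x xS; clear -cS cU'; lia.
  + by rewrite /pre /sz !(selR _ _ _ _ _ xR); have := B5 x xR; clear -cS cU'; lia.
- move=> x y xU yU exy; have cS := cardS; have cU' := cardU.
  case: (caseU x xU) => [xu|xS|xR].
  + rewrite xu in exy *; have yS : y \in S by apply: (Scl u) => //; rewrite /= yU.
    case: (eqVneq y u) => [->|yu]; first by rewrite ltnn.
    have yS' : y \in S' by rewrite inS' yu.
    by rewrite /ap selS //; have [s -> _] := apu y yS'; rewrite mem_cat in_cons eqxx orbT.
  + have xS0 : x \in S by move: xS; rewrite inS' => /andP [].
    have yS : y \in S by apply: (Scl x) => //; rewrite /= yU.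
    case: (eqVneq y u) => [->|yu].
      by rewrite /pre selu (selS _ _ _ _ _ xS); have := A5 x xS; clear -cS cU'; lia.
    have yS' : y \in S' by rewrite inS' yu.
    by rewrite /ap /pre !selS //; apply: A6.
  + case: (caseU y yU) => [->|yS|yR].
    * by rewrite /pre selu (selR _ _ _ _ _ xR); have := B5 x xR; clear -cS cU'; lia.
    * by rewrite /pre (selS _ _ _ _ _ yS) (selR _ _ _ _ _ xR); have := B5 x xR; have := A5 y yS; clear -cS cU'; lia.
    * by rewrite /ap /pre !selR //; apply: B6.
Qed.
End DFS.

Section Struct.
Variables (V : finType) (e : rel V).

Variables (ap : V -> seq V) (pre sz : V -> nat).
Hypothesis H2 : forall y, uniq (rcons (ap y) y) /\ cpath e (rcons (ap y) y).
Hypothesis H3 : forall y a, a \in ap y -> ap a = take (index a (ap y)) (ap y).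
Hypothesis H4 : forall x y, ((y == x) || (x \in ap y)) = (pre x <= pre y < pre x + sz x).
Hypothesis H6 : forall x y, e x y -> pre x < pre y -> x \in ap y.

Definition avoid y := [rel a b | e a b && (b \notin ap y)].
Definition R y := [set z | connect (avoid y) y z].

Lemma notin_self y : y \notin ap y.
Proof. by case: (H2 y); rewrite rcons_uniq => /andP []. Qed.

Lemma Rself y : y \in R y.
Proof. by rewrite inE connect0. Qed.

Lemma anc_trans x y z : x \in ap y -> y \in ap z -> x \in ap z.
Proof. by move=> xy /H3 ey; move: xy; rewrite ey => /mem_take. Qed.

Lemma sub_trans x y z : (y == x) || (x \in ap y) -> (z == y) || (y \in ap z) ->
  (z == x) || (x \in ap z).
Proof.
case/orP => [/eqP ->//|xy]; case/orP => [/eqP ->|yz]; first by rewrite xy orbT.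
by rewrite (anc_trans xy yz) orbT.
Qed.

Lemma R_notin y z : z \in R y -> z \notin ap y.
Proof.
rewrite inE; apply: (@connect_closed _ _ (fun z => z \notin ap y)); first exact: notin_self.
by move=> a b _ /andP [].
Qed.

Lemma R_pre y z : z \in R y -> pre z < pre y + sz y.
Proof.
move=> zR; have := R_notin zR; move: zR; rewrite inE => zR zn.
suff : (pre z < pre y + sz y) && (z \notin ap y) by case/andP.
apply: (@connect_closed _ (avoid y) (fun z => (pre z < pre y + sz y) && (z \notin ap y)) y z _ _ zR).
  have := H4 y y; rewrite eqxx /= => /esym/andP [_ ->]; exact: notin_self.
move=> a b /andP [ha na] /andP [eab nb]; rewrite nb andbT.
case: (leqP (pre b) (pre a)) => [ba|ab]; first exact: leq_ltn_trans ba ha.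
have aab := H6 eab ab.
case: (leqP (pre y) (pre a)) => [ya|ay].
  have sya : (a == y) || (y \in ap a) by rewrite H4 ya ha.
  have syb := sub_trans sya (_ : (b == a) || (a \in ap b)); rewrite aab orbT in syb.
  by move: (syb erefl); rewrite H4 => /andP [].
have : (b == a) || (a \in ap b) by rewrite aab orbT.
rewrite H4 => /andP [_ bsa].
rewrite ltnNge; apply/negP => yb.
have : (y == a) || (a \in ap y) by rewrite H4 (ltnW ay) /=; lia.
case/orP => [/eqP ya|]; first by rewrite ya ltnn in ay.
by rewrite (negbTE na).
Qed.

Lemma R_key y w z : w \in R y -> z \in R w -> z \notin ap y.
Proof.
move=> wR zR; apply/negP => zy.
have zw := R_notin zR; have zpw := R_pre zR.
have wy := R_notin wR; have wpy := R_pre wR.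
have := H4 z y; rewrite zy orbT => /esym/andP [zly ylz].
case: (leqP (pre w) (pre z)) => [wz|zw'].
  have : (z == w) || (w \in ap z) by rewrite H4 wz zpw.
  case/orP => [/eqP ezw|wz']; first by rewrite -ezw zy in wy.
  by rewrite (anc_trans wz' zy) in wy.
case: (ltnP (pre w) (pre y)) => [wly|ylw].
  have : (w == z) || (z \in ap w) by rewrite H4 (ltnW zw') /=; lia.
  case/orP => [/eqP ewz|]; first by rewrite ewz ltnn in zw'.
  by rewrite (negbTE zw).
have syw : (w == y) || (y \in ap w) by rewrite H4 ylw wpy.
have := sub_trans (_ : (y == z) || (z \in ap y)) syw; rewrite zy orbT => /(_ erefl).
case/orP => [/eqP ewz|]; first by rewrite ewz ltnn in zw'.
by rewrite (negbTE zw).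
Qed.

Lemma R_trans y w z : w \in R y -> z \in R w -> z \in R y.
Proof.
move=> wR zR; move: (zR); rewrite inE => zc.
suff : (z \in R y) && (z \in R w) by case/andP.
apply: (@connect_closed _ (avoid w) (fun z => (z \in R y) && (z \in R w)) w z _ _ zc); first by rewrite wR Rself.
move=> a b /andP [aRy aRw] /andP [eab nb].
have bRw : b \in R w.
  by rewrite inE; apply: connect_trans (_ : connect (avoid w) w a) (connect1 _) => //;
     [move: aRw; rewrite inE | rewrite /= eab].
rewrite bRw andbT inE; apply: connect_trans (_ : connect (avoid y) y a) (connect1 _).
  by move: aRy; rewrite inE.
by rewrite /= eab (R_key wR bRw).
Qed.

Lemma R_acyc x y : x \in R y -> y \in R x -> x = y.
Proof.
move=> xR yR.
have xn := R_notin xR; have yn := R_notin yR.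
have xp := R_pre xR; have yp := R_pre yR.
case: (leqP (pre x) (pre y)) => [xy|yx].
  have : (y == x) || (x \in ap y) by rewrite H4 xy yp.
  by rewrite (negbTE xn) orbF => /eqP.
have : (x == y) || (y \in ap x) by rewrite H4 (ltnW yx) xp.
by rewrite (negbTE yn) orbF => /eqP.
Qed.

Lemma cpath_cat_cons p1 a q : cpath e (p1 ++ a :: q) -> path e a q.
Proof.
case: p1 => [//|h t] /=; rewrite cat_path => /andP [_] /=.
by case/andP.
Qed.

Lemma path_avoid a x q : path e x q -> (forall b, b \in q -> b \notin ap a) -> path (avoid a) x q.
Proof.
elim: q x => //= b q IH x /andP [exb pth] hq.
rewrite exb (hq b (mem_head _ _)) /=; apply: IH => // c cq; apply: hq.
by rewrite in_cons cq orbT.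
Qed.

Lemma split_ap y a : a \in ap y ->
  ap y = ap a ++ a :: drop (index a (ap y)).+1 (ap y).
Proof.
move=> ay; rewrite (H3 ay) -{1}(cat_take_drop (index a (ap y)) (ap y)).
by rewrite (drop_nth a) ?index_mem // nth_index.
Qed.

Lemma anc_R a y : a \in ap y -> y \in R a.
Proof.
move=> ay; have E := split_ap ay.
set p2 := drop _ _ in E.
case: (H2 y) => u c; rewrite E rcons_cat in u c.
have pth := cpath_cat_cons c.
rewrite inE; apply/connectP; exists (rcons p2 y); last by rewrite last_rcons.
apply: path_avoid => // b bq; move: u; rewrite cat_uniq => /and3P [_ hn _].
apply/negP => ba; move/hasP: hn; apply; exists b => //.
by rewrite in_cons bq orbT.
Qed.

Definition bd y := [set a | (a \notin R y) && [exists w in R y, e w a]].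
Definition Xb y := y |: bd y.
Definition ltR x y := (x != y) && (y \in R x).
Definition Tr := [rel x y | ltR x y && [forall u, ~~ (ltR x u && ltR u y)]].

Lemma bd_anc y a : a \in bd y -> a \in ap y.
Proof.
rewrite inE => /andP [aR /existsP [w /andP [wR ewa]]].
apply/negPn/negP => an; move/negP: aR; apply.
rewrite inE; apply: connect_trans (_ : connect (avoid y) y w) (connect1 _).
  by move: wR; rewrite inE.
by rewrite /= ewa an.
Qed.

Lemma bd_notR y a : a \in bd y -> a \notin R y.
Proof. by rewrite inE => /andP []. Qed.

Lemma R_out y w a : w \in R y -> e w a -> (a \in R y) || (a \in bd y).
Proof.
move=> wR ewa; case aR: (a \in R y) => //=.
by rewrite inE aR /=; apply/existsP; exists w; rewrite wR ewa.
Qed.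

Lemma Rsub x y z : y \in R x -> z \in R y -> z \in R x.
Proof. exact: R_trans. Qed.

Lemma connT x y : connect Tr x y = (y \in R x).
Proof.
apply/idP/idP.
  apply: (@connect_closed _ Tr (fun z => z \in R x) x y); first exact: Rself.
  by move=> a b aR /andP [/andP [_ bR] _]; exact: R_trans aR bR.
pose I x y := [set v | (v \in R x) && (y \in R v)].
have inI : forall a b v, (v \in I a b) = (v \in R a) && (b \in R v).
  by move=> a b v; apply: (in_set (fun v => (v \in R a) && (b \in R v))).
suff : forall n x y, #|I x y| <= n -> y \in R x -> connect Tr x y.
  by move=> H; apply: (H #|I x y|).
elim=> [|n IH] {}x {}y cI yR.
  have : x \in I x y by rewrite inI Rself yR.
  by move=> xI; move: cI; rewrite leqn0 => /eqP/cards0_eq Ie; rewrite Ie in_set0 in xI.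
case: (eqVneq x y) => [->|xy]; first exact: connect0.
case fa: [forall u, ~~ (ltR x u && ltR u y)].
  by apply: connect1; rewrite /= /ltR xy yR fa.
move/negbT: fa; rewrite negb_forall => /existsP [u]; rewrite negbK.
case/andP => /andP [xu uR] /andP [uy yRu].
have xyu : x != u by [].
apply: (@connect_trans _ _ u); apply: IH.
- rewrite -ltnS; apply: leq_trans cI; apply: proper_card; apply/properP; split.
    apply/subsetP => v; rewrite !inI => /andP [vR uRv]; by rewrite vR (R_trans uRv yRu).
  exists y; first by rewrite inI yR Rself.
  rewrite inI yR /=; apply/negP => uRy.
  by move/eqP: uy; apply; apply: R_acyc.
- exact: uR.
- rewrite -ltnS; apply: leq_trans cI; apply: proper_card; apply/properP; split.
    apply/subsetP => v; rewrite !inI => /andP [vR yRv]; by rewrite yRv (R_trans uR vR).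
  exists x; first by rewrite inI Rself yR.
  rewrite inI yR andbT; apply/negP => xRu.
  by move/eqP: xu; apply; apply: R_acyc.
- exact: yRu.
Qed.

Lemma XS_sub y v : v \in Xsucc Tr Xb y -> (v \in R y) || (v \in bd y).
Proof.
move/bigcupP => [k]; rewrite /preceq connT => kR; rewrite in_setU1 => /orP [/eqP -> | vb].
  by rewrite kR.
move: (vb); rewrite inE => /andP [_ /existsP [w /andP [wR ewv]]].
exact: R_out (R_trans kR wR) ewv.
Qed.

Lemma XS_R y v : v \in R y -> v \in Xsucc Tr Xb y.
Proof. by move=> vR; apply/bigcupP; exists v; [rewrite /preceq connT | exact: setU11]. Qed.

Lemma XS_X y v : v \in Xb y -> v \in Xsucc Tr Xb y.
Proof. by move=> vX; apply/bigcupP; exists y; [rewrite /preceq connect0 |]. Qed.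

Lemma bd_root r : is_root Tr r -> forall a, a \in bd r -> False.
Proof.
move=> root a ab.
have ar : a != r by apply/eqP => ear; move: (bd_notR ab); rewrite ear Rself.
have := anc_R (bd_anc ab); rewrite -connT => /connectP [p].
case/lastP: p => [_ /eqP|p b]; first by rewrite eq_sym (negbTE ar).
rewrite last_rcons rcons_path => /andP [_ t] ebr; rewrite -ebr in t.
by move: (root (last a p)); rewrite t.
Qed.

Lemma dec : is_dag_decomposition e Tr Xb.
Proof.
split.
- move=> i j /andP [/andP [ij jR] _]; rewrite connT; apply/negP => iR.
  by move/eqP: ij; apply; exact: R_acyc iR jR.
- by apply/setP => v; rewrite inE; apply/bigcupP; exists v => //; exact: setU11.
- move=> i j k; rewrite /preceq !connT => jR kR; apply/subsetP => v.
  rewrite in_setI => /andP [vi vk].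
  case: (eqVneq j i) => [->//|ji]; case: (eqVneq k j) => [<-//|kj].
  have kRi := R_trans jR kR.
  move: vi vk; rewrite /Xb !in_setU1.
  case/orP => [/eqP vi | vbi]; case/orP => [/eqP vk | vbk].
  + have iRj : i \in R j by rewrite -vi vk.
    by exfalso; move/eqP: ji; apply; exact: R_acyc jR iRj.
  + move: (vbk); rewrite inE => /andP [_ /existsP [w /andP [wR ewv]]].
    case/orP: (R_out (R_trans kR wR) ewv) => [vR|->]; last by rewrite orbT.
    by exfalso; move/eqP: ji; rewrite vi in vR; apply; apply: R_acyc jR vR.
  + by move: (bd_notR vbi); rewrite vk kRi.
  + move: (vbk); rewrite inE => /andP [_ /existsP [w /andP [wR ewv]]].
    case/orP: (R_out (R_trans kR wR) ewv) => [vR|->]; last by rewrite orbT.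
    by move: (bd_notR vbi); rewrite (R_trans jR vR).
- move=> x y /andP [/andP [xy yR] cov]; split.
    rewrite disjoints_subset; apply/subsetP => v; rewrite in_setD => /andP [vx _].
    by rewrite in_setC in_setI negb_and vx.
  move=> u v; rewrite in_setD => /andP [ux uXS] euv; rewrite in_setU in_setD in_setI.
  case/orP: (XS_sub uXS) => [uR|ub].
  + case/orP: (R_out uR euv) => [vR|vb].
      rewrite (XS_R vR) andbT; apply/orP; left.
      rewrite /Xb in_setU1 negb_or; apply/andP; split.
        apply/eqP => vx; rewrite vx in vR; move/eqP: xy; apply.
        exact: R_acyc vR yR.
      by apply/negP => /bd_notR; rewrite (R_trans yR vR).
    case vX : (v \in Xb x); last by rewrite /= XS_X // /Xb in_setU1 vb orbT.
    by rewrite /= /Xb in_setU1 vb orbT.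
  + exfalso; have yRu := anc_R (bd_anc ub).
    case uRx : (u \in R x).
      move/forallP: cov => /(_ u); rewrite /ltR uRx yRu andbT /=.
      have -> : (x != u) by apply/eqP => xu; move: ux; rewrite -xu /Xb setU11.
      have -> : (u != y) by apply/eqP => uy; move: (bd_notR ub); rewrite uy Rself.
      by [].
    move: (ub); rewrite inE => /andP [_ /existsP [w /andP [wR ewu]]].
    case/orP: (R_out (R_trans yR wR) ewu) => [|ubx]; first by rewrite uRx.
    by move: ux; rewrite /Xb in_setU1 ubx orbT.
- move=> r root; split.
    by rewrite disjoints_subset; apply/subsetP => v _; rewrite in_setC in_set0.
  move=> u v uXS euv; rewrite in_setU in_set0 orbF.
  case/orP: (XS_sub uXS) => [uR|ub]; last by case: (bd_root root ub).
  case/orP: (R_out uR euv) => [vR|vb]; last by case: (bd_root root vb).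
  exact: XS_R.
Qed.

Lemma path_avoid_notin y x q : path (avoid y) x q -> forall z, z \in q -> z \notin ap y.
Proof.
elim: q x => //= b q IH x /andP [/andP [_ nb] pth] z; rewrite in_cons => /orP [/eqP ->//|zq].
exact: IH pth z zq.
Qed.

Lemma circ_ge (c : seq V) : uniq c -> cycle e c -> 0 < size c -> size c <= circ e.
Proof.
move=> uc cc sc.
have lt : size c < #|V|.+1 by rewrite ltnS -(card_uniqP uc) max_card.
have hc : has_cycle_of_length e (Ordinal lt).
  by rewrite /has_cycle_of_length /= sc /=; apply/existsP; exists (in_tuple c); rewrite uc cc.
rewrite /circ; apply: leq_trans (leq_maxr 1 _).
have := @leq_bigmax_cond _ (fun n : 'I_#|V|.+1 => has_cycle_of_length e n) (fun n => nat_of_ord n) (Ordinal lt) hc.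
exact.
Qed.

Lemma width y : #|Xb y| <= circ e + 1.
Proof.
rewrite /Xb cardsU1.
have c1 : 1 <= circ e by rewrite /circ leq_maxl.
case: (set_0Vmem (bd y)) => [->|[a0 a0b]].
  by rewrite cards0 addn0; apply: leq_trans (leq_b1 _) _; rewrite addn1 ltnS ltnW.
suff : #|bd y| + 1 <= circ e.
  by move=> h; apply: leq_trans (_ : 1 + #|bd y| <= _); [rewrite leq_add2r leq_b1 | rewrite addnC; apply: leq_trans h _; rewrite leq_addr].
set s := ap y.
have hs : has (mem (bd y)) s by apply/hasP; exists a0 => //; exact: bd_anc.
set i := find (mem (bd y)) s.
have iS : i < size s by rewrite -has_find.
set a := nth y s i.
have ab : a \in bd y := nth_find y hs.
have Es : s = take i s ++ a :: drop i.+1 s by rewrite -(drop_nth y iS) cat_take_drop.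
have bsub : {subset bd y <= drop i s}.
  move=> b bb; have bs : b \in s by apply: bd_anc.
  have ji : i <= index b s.
    rewrite leqNgt; apply/negP => jl; have := before_find y jl.
    by rewrite nth_index // => /negP; apply.
  rewrite -(nth_index y bs) -(subnKC ji) -nth_drop; apply: mem_nth.
  by rewrite size_drop ltn_sub2r // ?index_mem // (leq_ltn_trans ji) // index_mem.
move: (ab); rewrite inE => /andP [_ /existsP [w /andP [wR ewa]]].
move: wR; rewrite inE => /connectP [p0 pth0 wl0].
move: wl0; case: (shortenP pth0) => p pth up _ wl {pth0}.
have [us cs] := H2 y; rewrite -/s rcons_uniq in us cs; case/andP: us => ys us.
set cyc := drop i s ++ y :: p.
have ucyc : uniq cyc.
  have ud : uniq (drop i s) := drop_uniq i us.
  rewrite /cyc cat_uniq ud; apply/and3P; split => //; apply/hasPn => z zin.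
  apply/negP => /mem_drop zs; move: zin; rewrite in_cons => /orP [/eqP zy|zp].
    by rewrite -zy zs in ys.
  by move: (path_avoid_notin pth zp); rewrite zs.
have ccyc : cycle e cyc.
  rewrite /cyc (drop_nth y iS) -/a /= rcons_cat /= cat_path.
  rewrite Es rcons_cat /= in cs; have := cpath_cat_cons cs; rewrite rcons_path => /andP [h1 h2]; rewrite h1 /= h2 /=.
  rewrite rcons_path -wl ewa andbT; apply: sub_path pth.
  by move=> u v /andP [].
have := circ_ge ucyc ccyc; rewrite /cyc size_cat /= addnS ltnS => /(_ erefl) hc.
apply: leq_trans hc; rewrite addn1 ltnS.
apply: leq_trans (leq_addr _ _).
apply: leq_trans (card_size (drop i s)).
by apply: subset_leq_card; apply/subsetP.
Qed.

End Struct.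

Theorem mainTheorem2 (V : finType) (e : rel V) :
  simple_digraph e -> dgw_le e (circ e + 1).
Proof.
move=> _.
have [ap [pre [sz [_ [D2 [D3 [D4 [_ D6]]]]]]]] :
    exists ap, exists pre, exists sz, DFSinv e [set: V] [::] 0 ap pre sz.
  apply: (@dfs_ex V e #|[set: V]|) => // x _; exists x; first by rewrite inE.
  exact: connect0.
have H2 : forall y, uniq (rcons (ap y) y) /\ cpath e (rcons (ap y) y) by move=> y; apply: D2; rewrite inE.
have H3 : forall y a, a \in ap y -> ap a = take (index a (ap y)) (ap y) by move=> y a; apply: D3; rewrite inE.
have H4 : forall x y, ((y == x) || (x \in ap y)) = (pre x <= pre y < pre x + sz x) by move=> x y; apply: D4; rewrite inE.
have H6 : forall x y, e x y -> pre x < pre y -> x \in ap y by move=> x y; apply: D6; rewrite inE.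
exists V, (Tr e ap), (Xb e ap); split; first exact: dec H2 H3 H4 H6.
apply/bigmax_leqP => i _; exact: (@width V e ap H2 i).
Qed.
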